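(* Let $H$ be a Hermitian operator on a $d$-dimensional Hilbert space with spectral decomposition $H=\sum_{i=1}^M\lambda_i\Pi_i$, where $M\ge 2$, $\lambda_M>\cdots>\lambda_1$ are the distinct eigenvalues and $\Pi_i$ the spectral projections ($\Pi_i\Pi_j=\delta_{ij}\Pi_i$, $\sum_i\Pi_i=I$). Let $\Delta=\lambda_2-\lambda_1$ and $d_G=\operatorname{Tr}[\Pi_1]$, and write $\gamma=\frac{\Pi_1}{\operatorname{Tr}[\Pi_1]}$, $\tau_\beta=\frac{e^{-\beta H}}{\operatorname{Tr}[e^{-\beta H}]}$. Then for every $\beta\ge 0$, $$D(\gamma\|\tau_\beta)=\ln\!\left(1+\frac{\sum_{i=2}^Me^{-\beta(\lambda_i-\lambda_1)}\operatorname{Tr}[\Pi_i]}{d_G}\right)\le\ln\!\left(1+e^{-\beta\Delta}\left(\frac{d-d_G}{d_G}\right)\right),$$ and moreover, for all $\alpha\in(0,1)\cup(1,\infty)$, $$D(\gamma\|\tau_\beta)=D_\alpha(\gamma\|\tau_\beta)=\widetilde{D}_\alpha(\gamma\|\tau_\beta)=\widehat{D}_\alpha(\gamma\|\tau_\beta).$$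
   Context: For states $\rho,\sigma$: the quantum relative entropy is $D(\rho\|\sigma)=\operatorname{Tr}[\rho(\ln\rho-\ln\sigma)]$; the Petz–Rényi relative entropy is $D_\alpha(\rho\|\sigma)=\frac{1}{\alpha-1}\ln\operatorname{Tr}[\rho^\alpha\sigma^{1-\alpha}]$; the sandwiched Rényi relative entropy is $\widetilde{D}_\alpha(\rho\|\sigma)=\frac{1}{\alpha-1}\ln\operatorname{Tr}\!\left[\left(\sigma^{\frac{1-\alpha}{2\alpha}}\rho\,\sigma^{\frac{1-\alpha}{2\alpha}}\right)^\alpha\right]$; the geometric Rényi relative entropy is $\widehat{D}_\alpha(\rho\|\sigma)=\frac{1}{\alpha-1}\ln\operatorname{Tr}\!\left[\sigma\left(\sigma^{-1/2}\rho\,\sigma^{-1/2}\right)^\alpha\right]$ (here $\sigma$ is full rank). *)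

(* Defs.v *)
From HB Require Import structures.
From mathcomp Require Import all_boot all_order all_algebra.
From mathcomp Require Import sesquilinear spectral.
From mathcomp Require Import complex.
From mathcomp Require Import reals.
From mathcomp Require Import sequences.
From mathcomp.analysis Require Import exp.

Set Implicit Arguments.
Unset Strict Implicit.
Unset Printing Implicit Defensive.

Import Order.TTheory GRing.Theory Num.Theory.
Local Open Scope ring_scope.
Local Open Scope complex_scope.

Section QuantumDivergences.
Variable R : realType.
Local Notation C := R[i].

Definition RtoC (x : R) : C := x%:C.

(* Functional calculus f(A) for a Hermitian (more generally normal) matrix A,
   through the library's spectral decomposition
   A = (spectralmx A)^-1 *m diag_mx (spectral_diag A) *m spectralmx A
   (spectralmx A unitary); f is applied to the (real) eigenvalues. *)
Definition mxfun n (f : R -> R) (A : 'M[C]_n) : 'M[C]_n :=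
  invmx (spectralmx A) *m
  diag_mx (map_mx (fun z : C => RtoC (f (complex.Re z))) (spectral_diag A)) *m
  spectralmx A.

(* Matrix exponential, logarithm (with the support convention ln 0 = 0 of
   mathcomp-analysis) and real powers (0 ^ a = 0 for a <> 0). *)
Definition mexp n (A : 'M[C]_n) := mxfun expR A.
Definition mlog n (A : 'M[C]_n) := mxfun (@ln R) A.
Definition mpow n (a : R) (A : 'M[C]_n) := mxfun (fun x => powR x a) A.

(* Trace, as a real number (the traces below are real for the relevant
   positive semidefinite / Hermitian arguments). *)
Definition rtr n (A : 'M[C]_n) : R := complex.Re (\tr A).

Definition qrelent n (rho sigma : 'M[C]_n) : R :=
  rtr (rho *m (mlog rho - mlog sigma)).

Definition petz_renyi n (a : R) (rho sigma : 'M[C]_n) : R :=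
  (a - 1)^-1 * ln (rtr (mpow a rho *m mpow (1 - a) sigma)).

Definition sandwiched_renyi n (a : R) (rho sigma : 'M[C]_n) : R :=
  (a - 1)^-1 *
  ln (rtr (mpow a (mpow ((1 - a) / (2 * a)) sigma *m rho *m
                   mpow ((1 - a) / (2 * a)) sigma))).

(* Geometric Renyi relative entropy (sigma full rank). *)
Definition geometric_renyi n (a : R) (rho sigma : 'M[C]_n) : R :=
  (a - 1)^-1 *
  ln (rtr (sigma *m mpow a (mpow (- (1 / 2)) sigma *m rho *m
                            mpow (- (1 / 2)) sigma))).

End QuantumDivergences.

(* Main.v *)
Require Import Defs.
From HB Require Import structures.
From mathcomp Require Import all_boot all_order all_algebra.
From mathcomp Require Import sesquilinear spectral.
From mathcomp Require Import complex.
From mathcomp Require Import reals.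
From mathcomp Require Import sequences.
From mathcomp.analysis Require Import exp.
From mathcomp Require Import ring lra.
Import Order.TTheory GRing.Theory Num.Theory.
Local Open Scope ring_scope.
Set Implicit Arguments.
Unset Strict Implicit.
Unset Printing Implicit Defensive.

Section Gen.
Variable R : realType.
Local Notation C := R[i].

Lemma mxfun_gen n M (P : 'I_M -> 'M[C]_n) (f : R -> R) (A : 'M[C]_n) (c : 'I_M -> C) :
  A \is normalmx -> (forall i, A *m P i = c i *: P i) -> \sum_i P i = 1%:M ->
  mxfun f A = \sum_i RtoC (f (complex.Re (c i))) *: P i.
Proof.
move=> An hAP Psum; rewrite /mxfun.
set U := spectralmx A; set D := spectral_diag A.
have Uu : U \in unitmx := spectral_unit A.
have eA : A = invmx U *m diag_mx D *m U := orthomx_spectralP An.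
set g := fun z : C => RtoC (f (complex.Re z)).
pose Q i := U *m P i *m invmx U.
have dA : diag_mx D = U *m A *m invmx U.
  by rewrite eA !mulmxA mulmxV // mul1mx mulmxK.
have hQ i : diag_mx D *m Q i = c i *: Q i.
  rewrite dA /Q !mulmxA mulmxKV // -(mulmxA U A) hAP.
  by rewrite -scalemxAr -scalemxAl.
have sQ : \sum_i Q i = 1%:M.
  by rewrite /Q -mulmx_suml -mulmx_sumr Psum mulmx1 mulmxV.
suff -> : diag_mx (map_mx g D) = \sum_i g (c i) *: Q i.
  rewrite mulmx_sumr mulmx_suml. have e i : invmx U *m (g (c i) *: Q i) *m U = RtoC (f (complex.Re (c i))) *: P i.
  by rewrite /Q -scalemxAr -scalemxAl !mulmxA mulVmx // mul1mx mulmxKV.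
  by rewrite (eq_bigr _ (fun i _ => e i)).
apply/matrixP => k l; rewrite summxE; symmetry.
transitivity (\sum_i g (D 0 k) * Q i k l).
  apply: eq_bigr => i _; rewrite [LHS]mxE.
  have [->|nz] := eqVneq (Q i k l) 0; first by rewrite !mulr0.
  have /matrixP/(_ k l) := hQ i; rewrite mul_diag_mx mxE [in X in _ = X -> _]mxE.
  by move/(mulIf nz) ->.
by rewrite -mulr_sumr -summxE sQ !mxE mulr_natr.
Qed.

Lemma ReD (x y : C) : complex.Re (x + y) = complex.Re x + complex.Re y.
Proof. by case: x => ? ?; case: y. Qed.
Lemma ReMR (x : R) (y : C) : complex.Re (RtoC x * y) = x * complex.Re y.
Proof. case: y => a b /=. by rewrite mul0r subr0. Qed.
Lemma Re_sum I (r : seq I) P (F : I -> C) :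
  complex.Re (\sum_(i <- r | P i) F i) = \sum_(i <- r | P i) complex.Re (F i).
Proof. elim/big_rec2: _ => // i y1 y2 _ <-. by rewrite ReD. Qed.
Lemma Ren k : complex.Re (k%:R : C) = k%:R.
Proof. elim: k => // k IH. by rewrite -addn1 natrD ReD IH natrD. Qed.
Lemma RtoCM (x y : R) : RtoC (x * y) = RtoC x * RtoC y.
Proof. by rewrite /RtoC /=; congr Complex; rewrite ?mulr0 ?mul0r ?subr0 ?addr0. Qed.
Lemma RtoCB (x y : R) : RtoC (x - y) = RtoC x - RtoC y.
Proof. by rewrite /RtoC /=; congr Complex; rewrite subr0. Qed.
Lemma tr_sum n I (r : seq I) P (F : I -> 'M[C]_n) :
  \tr (\sum_(i <- r | P i) F i) = \sum_(i <- r | P i) \tr (F i).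
Proof. elim/big_rec2: _ => [|i y1 y2 _ <-]; by rewrite ?mxtrace0 ?mxtraceD. Qed.
Lemma RtoC1 : RtoC (1 : R) = 1. Proof. by []. Qed.

Section Sdef.
Variables (n M : nat) (Pi : 'I_M -> 'M[C]_n).
Hypothesis Pherm : forall i, Pi i \is hermsymmx.
Hypothesis Porth : forall i j, Pi i *m Pi j = (if i == j then Pi i else 0).
Hypothesis Psum : \sum_(i < M) Pi i = 1%:M.

Definition S (a : 'I_M -> R) : 'M[C]_n := \sum_i RtoC (a i) *: Pi i.

Lemma Pconj i k l : Pi i l k = Num.conj (Pi i k l).
Proof.
have /is_hermitianmxP := Pherm i; rewrite expr0 scale1r => /matrixP/(_ l k).
by rewrite !mxE.
Qed.

Lemma S_herm a : S a \is hermsymmx.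
Proof.
apply/is_hermitianmxP; rewrite expr0 scale1r; apply/matrixP => k l.
rewrite !mxE !summxE rmorph_sum; apply: eq_bigr => i _.
rewrite !mxE rmorphM /= (Pconj i l k) /RtoC; congr (_ * _); symmetry; exact: conjc_real.
Qed.

Lemma S_mulP a i : S a *m Pi i = RtoC (a i) *: Pi i.
Proof.
rewrite /S mulmx_suml (bigD1 i) //= -scalemxAl Porth eqxx big1 ?addr0 //.
by move=> j ji; rewrite -scalemxAl Porth (negbTE ji) scaler0.
Qed.

Lemma S_mul a b : S a *m S b = S (fun i => a i * b i).
Proof.
rewrite {2}/S mulmx_sumr; apply: eq_bigr => i _.
by rewrite -scalemxAr S_mulP scalerA RtoCM mulrC.
Qed.

Lemma mxfun_S f a : mxfun f (S a) = S (fun i => f (a i)).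
Proof.
exact: (@mxfun_gen n M Pi f (S a) (fun i => RtoC (a i))
         (hermitian_normalmx (S_herm a)) (S_mulP a) Psum).
Qed.

Lemma S_scale r a : RtoC r *: S a = S (fun i => r * a i).
Proof. rewrite /S scaler_sumr; apply: eq_bigr => i _; by rewrite scalerA RtoCM. Qed.

Lemma S_sub a b : S a - S b = S (fun i => a i - b i).
Proof. rewrite /S -sumrB; apply: eq_bigr => i _; by rewrite RtoCB scalerBl. Qed.

Lemma S1 : S (fun _ => 1) = 1%:M.
Proof. rewrite /S -Psum; apply: eq_bigr => i _; by rewrite RtoC1 scale1r. Qed.

Lemma rtr_S a : rtr (S a) = \sum_i a i * rtr (Pi i).
Proof.
rewrite /rtr /S tr_sum Re_sum; apply: eq_bigr => i _.
by rewrite mxtraceZ ReMR.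
Qed.

Lemma trP_sq i : \tr (Pi i) = \sum_k \sum_l Pi i k l * Num.conj (Pi i k l).
Proof.
have := Porth i i; rewrite eqxx => {1}<-.
rewrite /mxtrace; apply: eq_bigr => k _; rewrite mxE; apply: eq_bigr => l _.
by rewrite (Pconj i k l).
Qed.

Lemma rtr_ge0 i : 0 <= rtr (Pi i).
Proof.
have : 0 <= \tr (Pi i).
  rewrite trP_sq; apply: sumr_ge0 => k _; apply: sumr_ge0 => l _.
  exact: mulcJ_ge0.
by rewrite lecE => /andP[_].
Qed.

Lemma rtr_gt0 i : Pi i != 0 -> 0 < rtr (Pi i).
Proof.
move=> nz.
have ge : 0 <= \tr (Pi i).
  rewrite trP_sq; apply: sumr_ge0 => k _; apply: sumr_ge0 => l _.
  exact: mulcJ_ge0.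
have : 0 < \tr (Pi i).
  rewrite lt_def ge andbT; apply/eqP => /eqP.
  rewrite trP_sq psumr_eq0 => [/allP H|k _]; last first.
    by apply: sumr_ge0 => l _; exact: mulcJ_ge0.
  move: nz => /negP; apply; apply/eqP; apply/matrixP => k l.
  have /= := H k (mem_index_enum k).
  rewrite psumr_eq0 => [/allP/(_ l (mem_index_enum l))|l' _]; last exact: mulcJ_ge0.
  by rewrite mxE mulf_eq0 conjC_eq0 orbb => /eqP.
by rewrite ltcE => /andP[_].
Qed.

Lemma rtr_S1 a j : (forall i, i != j -> a i = 0) -> rtr (S a) = a j * rtr (Pi j).
Proof.
move=> H; rewrite rtr_S (bigD1 j) //= big1 ?addr0 // => i /H ->; exact: mul0r.
Qed.

Lemma sum_tr : \sum_i rtr (Pi i) = n%:R.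
Proof.
have := rtr_S (fun _ => 1); rewrite S1 /rtr mxtrace1 Ren => ->.
by apply: eq_bigr => i _; rewrite mul1r.
Qed.

End Sdef.
End Gen.

Unset Implicit Arguments.
Set Strict Implicit.

Ltac pos := rewrite ?posrE; repeat first [assumption | apply: mulr_gt0 | apply: powR_gt0 | rewrite invr_gt0].

Theorem proposition3 (R : realType) (n M : nat) (HM : (1 < M)%N)
    (H : 'M[R[i]]_n) (lam : 'I_M -> R) (Pi : 'I_M -> 'M[R[i]]_n) :
  H \is hermsymmx ->
  (forall i j : 'I_M, (i < j)%N -> lam i < lam j) ->
  (forall i, Pi i \is hermsymmx) ->
  (forall i, Pi i != 0) ->
  (forall i j, Pi i *m Pi j = (if i == j then Pi i else 0)) ->
  \sum_(i < M) Pi i = 1%:M ->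
  H = \sum_(i < M) RtoC (lam i) *: Pi i ->
  let i1 : 'I_M := Ordinal (ltn_trans (ltn0Sn 0) HM) in
  let i2 : 'I_M := Ordinal HM in
  let Delta := lam i2 - lam i1 in
  let dG := rtr (Pi i1) in
  let gamma := RtoC dG^-1 *: Pi i1 in
  forall beta : R, 0 <= beta ->
  let E := mexp (RtoC (- beta) *: H) in
  let tau := RtoC (rtr E)^-1 *: E in
  [/\ qrelent gamma tau
        = ln (1 + (\sum_(i < M | i != i1)
                     expR (- beta * (lam i - lam i1)) * rtr (Pi i)) / dG),
      qrelent gamma tau
        <= ln (1 + expR (- beta * Delta) * ((n%:R - dG) / dG)) &
      forall alpha : R, 0 < alpha -> alpha != 1 ->
        [/\ qrelent gamma tau = petz_renyi alpha gamma tau,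
            qrelent gamma tau = sandwiched_renyi alpha gamma tau &
            qrelent gamma tau = geometric_renyi alpha gamma tau]].
Proof.
move=> _ lam_mono Pherm Pnz Porth Psum eH i1 i2 Delta dG gamma beta hb E tau.
have Herm := Pherm; have Orth := Porth; have Sum := Psum.
pose g := fun i => if i == i1 then dG^-1 else 0.
have g0 : forall i, i != i1 -> g i = 0 by move=> i /negbTE; rewrite /g => ->.
have eg : gamma = S Pi g.
  rewrite /gamma /S (bigD1 i1) //= /g eqxx big1 ?addr0 // => j /negbTE ->.
  exact: scale0r.
pose e := fun i => expR (- beta * lam i).
have eE : E = S Pi e.
  by rewrite /E eH -/(S Pi lam) S_scale /mexp (mxfun_S Pherm Porth Psum).
have dG_gt0 : 0 < dG by exact: (rtr_gt0 Pherm Porth (Pnz i1)).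
have d_ge0 i : 0 <= rtr (Pi i) by exact: (rtr_ge0 Pherm Porth).
have e_gt0 i : 0 < e i by exact: expR_gt0.
pose Z := rtr E.
have eZ : Z = \sum_i e i * rtr (Pi i) by rewrite /Z eE rtr_S.
pose X := \sum_(i < M | i != i1) expR (- beta * (lam i - lam i1)) * rtr (Pi i).
have X_ge0 : 0 <= X by apply: sumr_ge0 => i _; rewrite mulr_ge0 // expR_ge0.
have eZX : Z = e i1 * (dG + X).
  rewrite eZ (bigD1 i1) //= mulrDr; congr (_ + _); rewrite /X mulr_sumr.
  apply: eq_bigr => i _; rewrite mulrA -expRD /e; congr (expR _ * _).
  by rewrite mulrBr addrC subrK.
have Z_gt0 : 0 < Z by rewrite eZX mulr_gt0 // ltr_wpDr.
pose t := fun i => Z^-1 * e i.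
have et : tau = S Pi t by rewrite /tau -/Z eE S_scale.
have [p ep] : {p : R | t i1 = p} by exists (t i1).
have p_gt0 : 0 < p by rewrite -ep mulr_gt0 // invr_gt0.
pose K := - ln dG - ln p.
have eK : qrelent gamma tau = K.
  rewrite /qrelent eg et /mlog !(mxfun_S Pherm Porth Psum) S_sub (S_mul Porth).
  rewrite (@rtr_S1 _ _ _ _ _ i1); last by move=> i /g0 ->; rewrite mul0r.
  rewrite /g eqxx -/dG lnV ?posrE // mulrC mulrA mulfV ?gt_eqF // mul1r.
  by rewrite /K ep.
have eX : K = ln (1 + X / dG).
  have -> : 1 + X / dG = (dG * p)^-1.
    rewrite -ep /t eZX; field.
    rewrite !gt_eqF // ?ltr_wpDr //; exact: dG_gt0.
  rewrite lnV; last by pos.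
  by rewrite lnM; [rewrite /K opprD| pos | pos].
have endG : n%:R - dG = \sum_(i < M | i != i1) rtr (Pi i).
  by rewrite -(sum_tr Psum) (bigD1 i1) //= addrC addrK.
have XdG : 0 <= X / dG by rewrite divr_ge0 // ltW.
have ndG : 0 <= (n%:R - dG) / dG by apply: divr_ge0; [rewrite endG; exact: sumr_ge0 | exact: ltW].
split.
- by rewrite eK eX.
- rewrite eK eX ler_ln ?posrE; first last.
  + have := expR_ge0 (- beta * Delta); nra.
  + lra.
  rewrite lerD2l mulrA ler_pM2r ?invr_gt0 //.
  rewrite endG mulr_sumr; apply: ler_sum => i ne.
  apply: ler_wpM2r => //; rewrite ler_expR !mulNr lerN2; apply: ler_wpM2l => //.
  rewrite /Delta lerD2r.
  have hi : (1 <= i)%N.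
    by rewrite lt0n; move: ne; apply: contra => /eqP h; apply/eqP/val_inj.
  move: hi; rewrite leq_eqVlt => /orP[/eqP h|h].
    by have -> : i = i2 by apply: val_inj.
  exact/ltW/lam_mono.
move=> alpha a0 a1.
have a0' : alpha != 0 by rewrite gt_eqF.
have a1' : alpha - 1 != 0 by rewrite subr_eq0.
have L : forall Y, ln Y = (1 - alpha) * (ln dG + ln p) -> K = (alpha - 1)^-1 * ln Y.
  by move=> Y ->; rewrite /K; field.
split; rewrite eK.
- rewrite /petz_renyi; apply: L.
  rewrite eg et /mpow !(mxfun_S Pherm Porth Psum) (S_mul Porth).
  rewrite (@rtr_S1 _ _ _ _ _ i1); last by move=> i /g0 ->; rewrite powR0 // mul0r.
  rewrite /g eqxx -/dG ep.
  rewrite !lnM; try solve [pos].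
  rewrite !ln_powR lnV; try solve [pos].
  ring.
- rewrite /sandwiched_renyi; apply: L.
  rewrite eg et /mpow !(mxfun_S Pherm Porth Psum) !(S_mul Porth).
  rewrite !(mxfun_S Pherm Porth Psum).
  rewrite (@rtr_S1 _ _ _ _ _ i1); last by move=> i /g0 ->; rewrite mulr0 mul0r powR0.
  rewrite /g eqxx -/dG ep.
  rewrite !lnM; try solve [pos].
  rewrite !ln_powR !lnM; try solve [pos].
  rewrite !ln_powR lnV; try solve [pos].
  by field.
- rewrite /geometric_renyi; apply: L.
  rewrite eg et /mpow !(mxfun_S Pherm Porth Psum) !(S_mul Porth).
  rewrite !(mxfun_S Pherm Porth Psum) !(S_mul Porth).
  rewrite (@rtr_S1 _ _ _ _ _ i1); last by move=> i /g0 ->; rewrite mulr0 mul0r powR0 ?mulr0.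
  rewrite /g eqxx -/dG ep.
  rewrite !lnM; try solve [pos].
  rewrite !ln_powR !lnM; try solve [pos].
  rewrite !ln_powR lnV; try solve [pos].
  by field.
Qed.
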